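(* Let $p>1$, $x^0\in\mathbb{R}^n$, and let $\varphi:\mathbb{R}^n\to\mathbb{R}\cup\{+\infty\}$ be a proper lower semicontinuous coercive function. If for some $r>0$ and $\lambda\in\mathbb{R}$ we have $\{x:\varphi(x)\le\varphi(x^0)+\lambda\}\subseteq\mathbb{B}(0;r)$, then there exists $\hat\gamma>0$ such that for each $\gamma\in(0,\hat\gamma]$, $\{x:\varphi^p_\gamma(x)\le\varphi^p_\gamma(x^0)+\lambda\}\subseteq\mathbb{B}(0;r)$.
   Context: $\varphi^p_\gamma(x):=\inf_{y\in\mathbb{R}^n}\big(\varphi(y)+\frac{1}{p\gamma}\|x-y\|^p\big)$ (high-order Moreau envelope); $\mathbb{B}(0;r)$ is the open Euclidean ball of radius $r$ centered at the origin. *)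

(* Defs.v *)
From HB Require Import structures.
From mathcomp Require Import all_boot all_order all_algebra.
From mathcomp Require Import all_classical all_reals all_analysis.
Set Implicit Arguments. Unset Strict Implicit. Unset Printing Implicit Defensive.
Import Order.TTheory GRing.Theory Num.Theory.
Local Open Scope classical_set_scope.
Local Open Scope ring_scope.

Definition enorm {R : realType} {n : nat} (x : 'rV[R]_n) : R :=
  Num.sqrt (\sum_(i < n) x ord0 i ^+ 2).

(* phi : R^n -> R u {+oo} : extended-real valued, never -oo *)
Definition no_minf {R : realType} {n : nat} (phi : 'rV[R]_n -> \bar R) : Prop :=
  forall x, phi x != -oo%E.

Definition proper_fun {R : realType} {n : nat} (phi : 'rV[R]_n -> \bar R) : Prop :=
  no_minf phi /\ exists x, phi x != +oo%E.

Definition lsc {R : realType} {n : nat} (phi : 'rV[R]_n -> \bar R) : Prop :=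
  forall x (t : R), (t%:E < phi x)%E ->
    exists2 d : R, 0 < d & forall y, enorm (y - x) < d -> (t%:E < phi y)%E.

Definition coercive {R : realType} {n : nat} (phi : 'rV[R]_n -> \bar R) : Prop :=
  forall M : R, exists R0 : R, forall x, R0 < enorm x -> (M%:E <= phi x)%E.

Definition moreau {R : realType} {n : nat} (phi : 'rV[R]_n -> \bar R)
    (p gamma : R) (x : 'rV[R]_n) : \bar R :=
  ereal_inf [set (phi y + ((enorm (x - y)) `^ p / (p * gamma))%:E)%E | y in [set: 'rV[R]_n]].

Definition euclid_ball0 {R : realType} {n : nat} (r : R) : set 'rV[R]_n :=
  [set x | enorm x < r].

(* Main.v *)
Require Import Defs.
From HB Require Import structures.
From mathcomp Require Import all_boot all_order all_algebra.
From mathcomp Require Import all_classical all_reals all_analysis.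
From mathcomp Require Import lra ring finmap.
Import Order.TTheory GRing.Theory Num.Theory numFieldNormedType.Exports.
Local Open Scope classical_set_scope.
Local Open Scope ring_scope.


Section E.
Variables (R : realType) (n : nat).
Implicit Types x y : 'rV[R]_n.

Definition ssq x : R := \sum_(i < n) x ord0 i ^+ 2.
Lemma ssq_ge0 x : 0 <= ssq x.
Proof. by apply: sumr_ge0 => i _; rewrite sqr_ge0. Qed.
Lemma enorm_ge0 x : 0 <= enorm x.
Proof. exact: sqrtr_ge0. Qed.
Lemma enorm_sq x : enorm x ^+ 2 = ssq x.
Proof. by rewrite /enorm sqr_sqrtr // ssq_ge0. Qed.
Lemma enormN x : enorm (- x) = enorm x.
Proof. by rewrite /enorm; congr Num.sqrt; apply: eq_bigr => i _; rewrite mxE sqrrN. Qed.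
Lemma enorm0 : enorm (0 : 'rV[R]_n) = 0.
Proof. by rewrite /enorm big1 ?sqrtr0 // => i _; rewrite mxE expr0n. Qed.
Lemma coord_le x i : `|x ord0 i| <= enorm x.
Proof.
rewrite -sqrtr_sqr /enorm ler_sqrt; last exact: ssq_ge0.
by rewrite (bigD1 i) //= lerDl; apply: sumr_ge0 => j _; rewrite sqr_ge0.
Qed.
Lemma mxnorm_le x : `|x| <= enorm x.
Proof.
rewrite [leLHS]/Num.Def.normr /= mx_normrE; apply: bigmax_le; first exact: enorm_ge0.
by move=> [a b] _ /=; rewrite (ord1 a); exact: coord_le.
Qed.
Lemma enorm_le_mx x : enorm x <= n%:R * `|x|.
Proof.
have h : ssq x <= (n%:R * `|x|) ^+ 2.
  apply: (@le_trans _ _ (\sum_(i < n) `|x| ^+ 2)).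
    apply: ler_sum => i _; rewrite -real_normK ?num_real //.
    rewrite lerXn2r ?nnegrE ?normr_ge0 //.
    rewrite [leRHS]/Num.Def.normr /= mx_normrE.
    by apply/bigmax_geP; right; exists (ord0, i).
  rewrite sumr_const card_ord exprMn -(mulr_natl (`|x| ^+ 2) n) ler_wpM2r ?sqr_ge0 //.
  by rewrite -natrX ler_nat; case: n => // k; rewrite expnS leq_pmulr.
rewrite /enorm -(@ger0_norm _ (n%:R * `|x|)) ?mulr_ge0 //.
by rewrite -sqrtr_sqr ler_sqrt // sqr_ge0.
Qed.
Lemma enorm_eq0_coord x i : enorm x = 0 -> x ord0 i = 0.
Proof. by move=> h; apply/eqP; rewrite -normr_eq0 eq_le normr_ge0 -h coord_le. Qed.
Lemma cs x y : \sum_(i < n) x ord0 i * y ord0 i <= enorm x * enorm y.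
Proof.
set S := \sum_(i < n) _.
have [/eqP h|h] := eqVneq (enorm x * enorm y) 0.
  rewrite mulf_eq0 in h; case/orP: h => /eqP h;
  rewrite /S big1 ?mulr_ge0 ?enorm_ge0 // => i _; by rewrite (enorm_eq0_coord _ i h) ?mulr0 ?mul0r.
have hp : 0 < enorm x * enorm y by rewrite lt_def h mulr_ge0 ?enorm_ge0.
have key : S * (enorm x * enorm y) *+ 2 <= (enorm x * enorm y) ^+ 2 *+ 2.
  rewrite /S mulr_suml -sumrMnl.
  have -> : (enorm x * enorm y) ^+ 2 *+ 2 =
     \sum_(i < n) ((x ord0 i * enorm y) ^+ 2 + (y ord0 i * enorm x) ^+ 2).
    rewrite big_split /=.
    rewrite (eq_bigr (fun i => x ord0 i ^+ 2 * enorm y ^+ 2)); last by move=> i _; rewrite exprMn.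
    rewrite [X in _ = _ + X](eq_bigr (fun i => y ord0 i ^+ 2 * enorm x ^+ 2)); last by move=> i _; rewrite exprMn.
    rewrite -!mulr_suml -/(ssq x) -/(ssq y) -!enorm_sq mulr2n; ring.
  apply: ler_sum => i _.
  rewrite -subr_ge0.
  have -> : (x ord0 i * enorm y) ^+ 2 + (y ord0 i * enorm x) ^+ 2 -
     x ord0 i * y ord0 i * (enorm x * enorm y) *+ 2
     = (x ord0 i * enorm y - y ord0 i * enorm x) ^+ 2.
    by rewrite !mulr2n; ring.
  exact: sqr_ge0.
rewrite lerMn2r /= in key.
by rewrite expr2 ler_pM2r in key.
Qed.
Lemma enorm_triangle x y : enorm (x + y) <= enorm x + enorm y.
Proof.
rewrite -(@ler_pXn2r _ 2) ?nnegrE ?addr_ge0 ?enorm_ge0 //.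
have e : ssq (x + y) = ssq x + ssq y + (\sum_(i < n) x ord0 i * y ord0 i) *+ 2.
  rewrite /ssq -sumrMnl -!big_split /=; apply: eq_bigr => i _.
  by rewrite mxE !mulr2n; ring.
rewrite enorm_sq e sqrrD !enorm_sq !mulr2n.
have := cs x y; lra.
Qed.
End E.
Arguments ssq {R n}.
Arguments ssq_ge0 {R n}.
Arguments enorm_ge0 {R n}.
Arguments enorm_sq {R n}.
Arguments enormN {R n}.
Arguments enorm0 {R n}.
Arguments coord_le {R n}.
Arguments mxnorm_le {R n}.
Arguments enorm_le_mx {R n}.
Arguments enorm_eq0_coord {R n}.
Arguments cs {R n}.
Arguments enorm_triangle {R n}.


Section F.
Variables (R : realType) (n : nat).
Implicit Types x y : 'rV[R]_n.

Lemma enorm_sym x y : enorm (x - y) = enorm (y - x).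
Proof. by rewrite -enormN opprB. Qed.

Lemma enorm_cont : continuous (fun x : 'rV[R]_n => (enorm x : R)).
Proof.
move=> x; apply/(@cvgrPdist_lt _ _ _ _ (nbhs_filter x)) => e e0.
have d0 : 0 < e / n.+1%:R by rewrite divr_gt0.
apply/nbhs_ballP; exists (e / n.+1%:R) => //= y; rewrite -ball_normE /ball_ /= => hxy.
have h1 : enorm x <= enorm (x - y) + enorm y.
  by have := enorm_triangle (x - y) y; rewrite subrK.
have h2 : enorm y <= enorm (x - y) + enorm x.
  by have := enorm_triangle (y - x) x; rewrite subrK enorm_sym.
have h3 : enorm (x - y) < e.
  apply: (le_lt_trans (enorm_le_mx _)).
  apply: (@le_lt_trans _ _ (n.+1%:R * `|x - y|)).
    by rewrite ler_wpM2r ?normr_ge0 // ler_nat.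
  by rewrite mulrC -ltr_pdivlMr // ltr0n.
rewrite ltr_norml; apply/andP; split; lra.
Qed.

Lemma seq_min (T : eqType) (s : seq T) (g : T -> R) (P : R -> Prop) t0 :
  (forall a b, P a -> P b -> P (Num.min a b)) -> P t0 ->
  (forall u, u \in s -> P (g u)) ->
  exists2 m, P m & forall u, u \in s -> m <= g u.
Proof.
move=> hmin h0; elim: s => [|a s IH] hs; first by exists t0.
have [m Pm hm] : exists2 m, P m & forall u, u \in s -> m <= g u.
  by apply: IH => y ys; apply: hs; rewrite in_cons ys orbT.
exists (Num.min (g a) m); first by apply: hmin => //; apply: hs; rewrite in_cons eqxx.
move=> u; rewrite in_cons => /orP[/eqP ->|ys]; first by rewrite ge_min lexx.
by rewrite ge_min (hm _ ys) orbT.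
Qed.

Lemma open_eball y d : open [set z : 'rV[R]_n | enorm (z - y) < d].
Proof.
have -> : [set z : 'rV[R]_n | enorm (z - y) < d] =
   (fun z => enorm (z - y)) @^-1` [set t : R | t < d] by [].
apply: (@open_comp _ R (fun z : 'rV[R]_n => enorm (z - y)) [set t : R | t < d]); last exact: open_lt.
move=> z _; apply: continuous_comp; last exact: enorm_cont.
apply/(@cvgrPdist_lt _ _ _ _ (nbhs_filter z)) => e e0.
apply/nbhs_ballP; exists e => //= w; rewrite -ball_normE /ball_ /=.
by rewrite opprB addrA subrK.
Qed.

Lemma key (f : 'rV[R]_n -> \bar R) (K : set 'rV[R]_n) (P : R -> Prop) (t0 : R) :
  lsc f -> compact K -> (forall a b, P a -> P b -> P (Num.min a b)) -> P t0 ->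
  (forall y, K y -> exists2 t, P t & (t%:E < f y)%E) ->
  exists2 eta, 0 < eta & exists2 m, P m &
    forall z y, K y -> enorm (z - y) < eta -> (m%:E < f z)%E.
Proof.
move=> lscf cK hmin h0 H.
have H' : forall y, exists td : R * R, K y ->
    [/\ P td.1, 0 < td.2 & forall z, enorm (z - y) < td.2 -> (td.1%:E < f z)%E].
  move=> y; case: (pselect (K y)) => Ky; last by exists (0, 0).
  have [t Pt tf] := H y Ky; have [d d0 hd] := lscf y t tf.
  by exists (t, d).
have [g hg] := choice H'.
rewrite compact_cover in cK.
have covK : K `<=` cover K (fun y => [set z | enorm (z - y) < (g y).2 / 2]).
  move=> y Ky; exists y => //=; have [_ d0 _] := hg y Ky.
  by rewrite subrr enorm0 divr_gt0.
have [D' sub cov] := cK _ K (fun y => [set z | enorm (z - y) < (g y).2 / 2])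
  (fun y _ => open_eball y _) covK.
have subK : forall y, y \in D' -> K y.
  by move=> y /sub; rewrite in_setE.
have [eta eta0 heta] : exists2 eta, 0 < eta & forall u, u \in D' -> eta <= (g u).2 / 2.
  apply: (@seq_min _ D' (fun y => (g y).2 / 2) (fun t => 0 < t) 1).
  - by move=> a b a0 b0; rewrite lt_min a0 b0.
  - exact: ltr01.
  - by move=> y yD; have [_ d0 _] := hg y (subK y yD); rewrite divr_gt0.
have [m Pm hm] : exists2 m, P m & forall u, u \in D' -> m <= (g u).1.
  apply: (@seq_min _ D' (fun y => (g y).1) P t0) => //.
  by move=> y yD; have [] := hg y (subK y yD).
exists eta => //; exists m => // z y Ky hz.
have [i /= iD hi] := cov y Ky.
have [_ d0 hd] := hg i (subK i iD).
apply: (le_lt_trans _ (hd z _)); first by rewrite lee_fin hm.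
have := enorm_triangle (z - y) (y - i); rewrite addrA subrK => ht.
apply: (le_lt_trans ht).
have := heta i iD; lra.
Qed.
End F.


Lemma closed_enorm_le (R : realType) n (B : R) : closed [set y : 'rV[R]_n | enorm y <= B].
Proof.
have -> : [set y : 'rV[R]_n | enorm y <= B] = (fun y => enorm y) @^-1` [set t : R | t <= B] by [].
apply: (@preimage_closed _ R (fun y : 'rV[R]_n => enorm y)); last exact: closed_le.
by move=> z _; exact: enorm_cont.
Qed.

Lemma closed_enorm_ge (R : realType) n (B : R) : closed [set y : 'rV[R]_n | B <= enorm y].
Proof.
have -> : [set y : 'rV[R]_n | B <= enorm y] = (fun y => enorm y) @^-1` [set t : R | B <= t] by [].
apply: (@preimage_closed _ R (fun y : 'rV[R]_n => enorm y)); last exact: closed_ge.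
by move=> z _; exact: enorm_cont.
Qed.

Lemma compact_eball (R : realType) n (B : R) (S : set 'rV[R]_n) : closed S ->
  compact ([set y : 'rV[R]_n | enorm y <= B] `&` S).
Proof.
move=> cS; apply: bounded_closed_compact; last exact: closedI (closed_enorm_le _ _ B) cS.
exists B; split; first exact: num_real.
move=> M hM y [hy _]; apply: le_trans (mxnorm_le y) _.
exact: le_trans hy (ltW hM).
Qed.

Lemma ex_below (R : realType) (v : \bar R) : v != -oo%E -> exists2 t : R, True & (t%:E < v)%E.
Proof.
case: v => [a| |] // _; last by exists 0 => //; exact: ltey.
by exists (a - 1) => //; rewrite lte_fin; lra.
Qed.

Lemma ex_between (R : realType) (c : R) (v : \bar R) : (c%:E < v)%E -> exists2 t : R, c < t & (t%:E < v)%E.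
Proof.
case: v => [a| |] //; last by move=> _; exists (c + 1); [lra | exact: ltey].
by rewrite lte_fin => h; exists ((c + a) / 2); rewrite ?lte_fin; lra.
Qed.

Theorem corollary1 (R : realType) (n : nat) (p : R) (x0 : 'rV[R]_n)
  (phi : 'rV[R]_n -> \bar R) (r lam : R) :
  1 < p -> proper_fun phi -> lsc phi -> coercive phi -> 0 < r ->
  [set x | (phi x <= phi x0 + lam%:E)%E] `<=` euclid_ball0 r ->
  exists2 ghat : R, 0 < ghat &
    forall gamma : R, 0 < gamma -> gamma <= ghat ->
      [set x | (moreau phi p gamma x <= moreau phi p gamma x0 + lam%:E)%E]
        `<=` euclid_ball0 r.
Proof.
move=> p1 [nm _] lscf coer r0 hsub.
have [hx0|hx0] := eqVneq (phi x0) +oo%E.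
  exists 1 => // gamma _ _ x _; apply: hsub => /=.
  by rewrite hx0 addye // leey.
set C := fine (phi x0).
have eC : phi x0 = C%:E by rewrite fineK // fin_numE hx0 nm.
set c := C + lam.
have hgt : forall y, r <= enorm y -> (c%:E < phi y)%E.
  move=> y ry; rewrite ltNge; apply/negP => h.
  have := hsub y; rewrite /= eC -EFinD => /(_ h); rewrite /euclid_ball0 /=; lra.
have [R0 hR0] := coer (c + 1).
have [e1 e10 [m1 _ hm1]] := @key R n phi ([set y | enorm y <= R0] `&` setT)
  (fun _ => True) 0 lscf (@compact_eball R n R0 _ closedT) (fun _ _ _ _ => I) I
  (fun y _ => @ex_below R _ (nm y)).
set mlo := Num.min m1 c.
have hlo : forall y, (mlo%:E <= phi y)%E.
  move=> y; have [hy|hy] := ltP R0 (enorm y).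
    apply: le_trans (hR0 y hy); rewrite lee_fin /mlo ge_min; apply/orP; right; lra.
  apply/ltW/(le_lt_trans _ (hm1 y y _ _)); first by rewrite lee_fin ge_min lexx.
    by split.
  by rewrite subrr enorm0.
have hminc : forall a b, c < a -> c < b -> c < Num.min a b.
  by move=> a b ha hb; rewrite lt_min ha hb.
have [eta eta0 [m cm hgap]] := @key R n phi ([set y | enorm y <= R0 + 1] `&` [set y | r <= enorm y])
  (fun t => c < t) (c + 1) lscf (@compact_eball R n (R0 + 1) _ (closed_enorm_ge R n r))
  hminc (ltac:(lra) : c < c + 1)
  (fun y Ky => @ex_between R _ _ (hgt y Ky.2)).
set eta' := Num.min eta 1.
have eta'0 : 0 < eta' by rewrite lt_min eta0 ltr01.
have eta'1 : eta' <= 1 by rewrite ge_min lexx orbT.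
have eta'e : eta' <= eta by rewrite ge_min lexx.
set L := Num.min m (c + 1).
have cL : c < L by rewrite lt_min cm; lra.
have mloc : mlo <= c by rewrite /mlo ge_min lexx orbT.
have p0 : 0 < p by lra.
set A := eta' `^ p.
have A0 : 0 < A by rewrite powR_gt0.
set ghat := A / (p * (c + 1 - mlo)).
have ghat0 : 0 < ghat by rewrite divr_gt0 // mulr_gt0 //; lra.
exists ghat => // gamma g0 gle x /= hx.
rewrite /euclid_ball0 /= ltNge; apply/negP => rx.
have claim : forall y, (L%:E <= phi y + ((enorm (x - y)) `^ p / (p * gamma))%:E)%E.
  move=> y.
  have T0 : 0 <= (enorm (x - y)) `^ p / (p * gamma) by rewrite divr_ge0 ?powR_ge0 // mulr_ge0 //; lra.
  have [hxy|hxy] := leP eta' (enorm (x - y)).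
    have h1 : A <= enorm (x - y) `^ p.
      by apply: ge0_ler_powR => //; [lra | rewrite nnegrE; lra | rewrite nnegrE enorm_ge0].
    have h2 : c + 1 - mlo <= A / (p * gamma).
      have -> : c + 1 - mlo = A / (p * ghat).
        rewrite /ghat; field.
        have hc : 0 < c + 1 - mlo by lra.
        by rewrite (gt_eqF hc) (gt_eqF p0) (gt_eqF A0).
      apply: ler_wpM2l; first exact: ltW A0.
      have hpg : 0 < p * gamma by rewrite mulr_gt0.
      have hpgh : 0 < p * ghat by rewrite mulr_gt0.
      rewrite lef_pV2 ?posrE //.
      by apply: ler_wpM2l => //; exact: ltW.
    have h3 : A / (p * gamma) <= enorm (x - y) `^ p / (p * gamma).
      by rewrite ler_pM2r // invr_gt0 mulr_gt0.
    have h4 : ((c + 1 - mlo)%:E <= ((enorm (x - y)) `^ p / (p * gamma))%:E)%E.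
      by rewrite lee_fin; exact: le_trans h2 h3.
    apply: (le_trans _ (leeD (hlo y) h4)).
    by rewrite -EFinD lee_fin /L ge_min; apply/orP; right; lra.
  apply: le_trans (leeDl _ _); last by rewrite lee_fin.
  have [hy|hy] := ltP R0 (enorm y).
    by apply: le_trans (hR0 y hy); rewrite lee_fin /L ge_min lexx orbT.
  apply/ltW/(le_lt_trans _ (hgap y x _ _)); first by rewrite lee_fin /L ge_min lexx.
    split => //=.
    have := enorm_triangle y (x - y); rewrite addrC subrK; lra.
  rewrite enorm_sym; lra.
have hL : (L%:E <= moreau phi p gamma x)%E.
  by apply: le_ereal_inf_tmp => _ [y _ <-]; exact: claim.
have hx0' : (moreau phi p gamma x0 <= phi x0)%E.
  apply: ereal_inf_le; exists (phi x0); last by [].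
  exists x0 => //; rewrite subrr enorm0 powR0 ?gt_eqF // mul0r adde0 //.
have := le_trans hL (le_trans hx (leeD2r _ hx0')).
rewrite eC -EFinD lee_fin -/c; lra.
Qed.
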